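(* Let $A$ with projections $\pi_B:A\to B$, $\pi_C:A\to C$ be a pullback in $\mathbf{Sets}$ of $f_1:B\to D$ and $g_1:C\to D$, where $g_1$ is injective. Then $\mathcal{PP}_b(A)$ with $\mathcal{PP}_b(\pi_B),\mathcal{PP}_b(\pi_C)$ is a pullback of $\mathcal{PP}_b(f_1)$ and $\mathcal{PP}_b(g_1)$ in $\mathbf{Sets}$.
   Context: For a set $M$ whose elements are treated as atoms (urelements, distinct from every set built below), let $T_1=\mathcal{P}(M)$, $T_{n+1}=T_n\cup\mathcal{P}(T_n)$, and $\mathcal{PP}_b(M)=\bigcup_{n\ge 1}T_n$. For $f:M\to N$, $\mathcal{PP}_b(f)$ is defined recursively on $X\in\mathcal{PP}_b(M)$ by $\mathcal{PP}_b(f)(X)=\{f(x)\mid x\in X\cap M\}\cup\{\mathcal{PP}_b(f)(x)\mid x\in X\setminus M\}$; this makes $\mathcal{PP}_b$ a functor $\mathbf{Sets}\to\mathbf{Sets}$. *)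

(* Defs.v *)
From Stdlib Require Import ClassicalEpsilon.

Definition is_pullback {A B C D : Type}
  (pB : A -> B) (pC : A -> C) (f : B -> D) (g : C -> D) : Prop :=
  (forall a, f (pB a) = g (pC a)) /\
  (forall (X : Type) (h : X -> B) (k : X -> C),
     (forall x, f (h x) = g (k x)) ->
     exists u : X -> A,
       (forall x, pB (u x) = h x) /\ (forall x, pC (u x) = k x) /\
       (forall u' : X -> A,
          (forall x, pB (u' x) = h x) -> (forall x, pC (u' x) = k x) ->
          forall x, u' x = u x)).

(* Codes for the levels T_{n+1} of PP_b(M).                             *)
(* Lvl M 0 codes T_1 = P(M): a subset of M.                             *)
(* Lvl M (S k) codes T_{k+2} = T_{k+1} u P(T_{k+1}) = P(M) u P(T_{k+1}):*)
(*   inl P  : the subset P of M (atoms),                                *)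
(*   inr X  : the set { [[u]] | X u } of elements of T_{k+1}.           *)
Fixpoint Lvl (M : Type) (n : nat) : Type :=
  match n with
  | O => M -> Prop
  | S k => ((M -> Prop) + (Lvl M k -> Prop))%type
  end.

(* Equality of the denoted sets (atoms are distinct from all sets;      *)
(* the only set that is both a set of atoms and a set of sets is the    *)
(* empty set).                                                          *)
Definition eq_atoms (M : Type) (P : M -> Prop) (m : nat) : Lvl M m -> Prop :=
  match m return Lvl M m -> Prop with
  | O => fun P' => forall a, P a <-> P' a
  | S _ => fun y => match y with
                    | inl P' => forall a, P a <-> P' a
                    | inr Y => (forall a, ~ P a) /\ (forall v, ~ Y v)
                    end
  end.

Fixpoint eqc (M : Type) (n : nat) : Lvl M n -> forall m, Lvl M m -> Prop :=
  match n return Lvl M n -> forall m, Lvl M m -> Prop with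
  | O => fun P => eq_atoms M P
  | S k => fun x =>
      match x with
      | inl P => eq_atoms M P
      | inr X => fun m =>
          match m return Lvl M m -> Prop with
          | O => fun P' => (forall u, ~ X u) /\ (forall a, ~ P' a)
          | S m' => fun y =>
              match y with
              | inl P' => (forall u, ~ X u) /\ (forall a, ~ P' a)
              | inr Y =>
                  (forall u, X u -> exists v, Y v /\ eqc M k u m' v) /\
                  (forall v, Y v -> exists u, X u /\ eqc M k u m' v)
              end
          end
      end
  end.

(* Action of PP_b(f) on codes:                                          *)
(* PP_b(f)(X) = {f x | x in X n M} u {PP_b(f) x | x in X \ M}.          *)
Fixpoint lmap (M N : Type) (f : M -> N) (n : nat) : Lvl M n -> Lvl N n :=
  match n return Lvl M n -> Lvl N n with
  | O => fun P => fun b => exists a, P a /\ f a = b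
  | S k => fun x =>
      match x with
      | inl P => inl (fun b => exists a, P a /\ f a = b)
      | inr X => inr (fun v => exists u, X u /\ v = lmap M N f k u)
      end
  end.

Definition Code (M : Type) : Type := {n : nat & Lvl M n}.

Definition ceq {M : Type} (x y : Code M) : Prop :=
  eqc M (projT1 x) (projT2 x) (projT1 y) (projT2 y).

Definition cmap {M N : Type} (f : M -> N) (x : Code M) : Code N :=
  existT _ (projT1 x) (lmap M N f (projT1 x) (projT2 x)).

(* PP_b(M): codes up to equality of the denoted sets, i.e. the set of   *)
(* equivalence classes of codes (a genuine type with Leibniz equality). *)
Definition PPb (M : Type) : Type := {K : Code M -> Prop | exists x, K = ceq x}.

Definition cls {M : Type} (x : Code M) : PPb M :=
  exist _ (ceq x) (ex_intro _ x eq_refl).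

Definition rep {M : Type} (K : PPb M) : Code M :=
  proj1_sig (constructive_indefinite_description _ (proj2_sig K)).

Definition PPb_map {M N : Type} (f : M -> N) (K : PPb M) : PPb N :=
  cls (cmap f (rep K)).

(* Main.v *)
Require Import Defs.
From Stdlib Require Import FunctionalExtensionality PropExtensionality ProofIrrelevance ClassicalEpsilon.

Lemma eqc_refl M n (x : Lvl M n) : eqc M n x n x.
Proof.
  induction n as [|k IH]; simpl.
  - firstorder.
  - destruct x as [P|X]; simpl; [firstorder|].
    split; intros u Hu; exists u; auto.
Qed.

Lemma eqc_sym M n (x : Lvl M n) m (y : Lvl M m) : eqc M n x m y -> eqc M m y n x.
Proof.
  revert x m y; induction n as [|k IH]; intros x m y.
  - destruct m as [|m]; simpl; [firstorder|]. destruct y; simpl; firstorder.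
  - destruct x as [P|X]; destruct m as [|m]; simpl; try (destruct y); simpl; try firstorder.
Qed.

Lemma eqc_trans M n (x : Lvl M n) m (y : Lvl M m) p (z : Lvl M p) :
  eqc M n x m y -> eqc M m y p z -> eqc M n x p z.
Proof.
  revert x m y p z; induction n as [|k IH]; intros x m y p z.
  - destruct m as [|m]; destruct p as [|p]; simpl; try destruct y; try destruct z; simpl; try firstorder.
  - destruct x as [P|X].
    + destruct m as [|m]; destruct p as [|p]; simpl; try destruct y; try destruct z; simpl; firstorder.
    + destruct m as [|m]; [simpl; destruct p; try destruct z; simpl; firstorder|].
      destruct y as [P'|Y]; [simpl; destruct p; try destruct z; simpl; firstorder|].
      destruct p as [|p]; [simpl; firstorder|]. destruct z as [P''|Z]; [simpl; firstorder|].
      simpl. intros [K1 K2] [K3 K4]; split; intros w Hw;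
      [ destruct (K1 w Hw) as (v & Hv & E1); destruct (K3 v Hv) as (z & Hz & E2); exists z
      | destruct (K4 w Hw) as (v & Hv & E1); destruct (K2 v Hv) as (z & Hz & E2); exists z ]; split; eauto.
Qed.

Lemma lmap_comp M N O (f : M -> N) (g : N -> O) n (x : Lvl M n) :
  lmap M O (fun a => g (f a)) n x = lmap N O g n (lmap M N f n x).
Proof.
  induction n as [|k IH]; simpl.
  - apply functional_extensionality; intro c; apply propositional_extensionality; firstorder.
    subst; eauto.
  - destruct x as [P|X]; f_equal; apply functional_extensionality; intro c;
      apply propositional_extensionality; [firstorder; subst; eauto|].
    split.
    + intros (u & Hu & ->). exists (lmap M N f k u). split; eauto.
    + intros (w & (u & Hu & ->) & ->). exists u; split; auto.
Qed.

Lemma lmap_eqc M N (f : M -> N) n (x : Lvl M n) m (y : Lvl M m) :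
  eqc M n x m y -> eqc N n (lmap M N f n x) m (lmap M N f m y).
Proof.
  revert x m y; induction n as [|k IH]; intros x m y.
  - destruct m as [|m]; simpl; [firstorder|]. destruct y; simpl; firstorder.
  - destruct x as [P|X]; [destruct m as [|m]; simpl; try destruct y; simpl; firstorder|].
    destruct m as [|m]; simpl; [firstorder|]. destruct y as [P'|Y]; simpl; [firstorder|].
    + intros [K1 K2]; split.
      * intros w (u & Hu & ->). destruct (K1 u Hu) as (v & Hv & E). exists (lmap M N f m v); split; eauto.
      * intros w (v & Hv & ->). destruct (K2 v Hv) as (u & Hu & E). exists (lmap M N f k u); split; eauto.
Qed.

Ltac empt := let H1 := fresh in let H2 := fresh in intros [H1 H2]; split; [intros ? ?; eapply H1; eauto | intros ? ?; eapply H2; eauto].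

Lemma lmap_eqc_inv M N (f : M -> N) (Hf : forall a b, f a = f b -> a = b) n (x : Lvl M n) m (y : Lvl M m) :
  eqc N n (lmap M N f n x) m (lmap M N f m y) -> eqc M n x m y.
Proof.
  revert x m y; induction n as [|k IH]; intros x m y.
  - destruct m as [|m]; simpl.
    + intros H a; split; intro Ha.
      * destruct (proj1 (H (f a)) (ex_intro _ a (conj Ha eq_refl))) as (a' & Ha' & E). rewrite (Hf _ _ E) in Ha'; exact Ha'.
      * destruct (proj2 (H (f a)) (ex_intro _ a (conj Ha eq_refl))) as (a' & Ha' & E). rewrite (Hf _ _ E) in Ha'; exact Ha'.
    + destruct y; simpl.
      * intros H a; split; intro Ha.
        -- destruct (proj1 (H (f a)) (ex_intro _ a (conj Ha eq_refl))) as (a' & Ha' & E). rewrite (Hf _ _ E) in Ha'; exact Ha'.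
        -- destruct (proj2 (H (f a)) (ex_intro _ a (conj Ha eq_refl))) as (a' & Ha' & E). rewrite (Hf _ _ E) in Ha'; exact Ha'.
      * empt.
  - destruct x as [P|X].
    + destruct m as [|m]; simpl; [|destruct y; simpl]; try empt.
      * intros H a; split; intro Ha.
        -- destruct (proj1 (H (f a)) (ex_intro _ a (conj Ha eq_refl))) as (a' & Ha' & E). rewrite (Hf _ _ E) in Ha'; exact Ha'.
        -- destruct (proj2 (H (f a)) (ex_intro _ a (conj Ha eq_refl))) as (a' & Ha' & E). rewrite (Hf _ _ E) in Ha'; exact Ha'.
      * intros H a; split; intro Ha.
        -- destruct (proj1 (H (f a)) (ex_intro _ a (conj Ha eq_refl))) as (a' & Ha' & E). rewrite (Hf _ _ E) in Ha'; exact Ha'.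
        -- destruct (proj2 (H (f a)) (ex_intro _ a (conj Ha eq_refl))) as (a' & Ha' & E). rewrite (Hf _ _ E) in Ha'; exact Ha'.
    + destruct m as [|m]; simpl; [empt|]. destruct y as [P'|Y]; simpl; [empt|].
      intros [K1 K2]; split.
      * intros u Hu. destruct (K1 _ (ex_intro _ u (conj Hu eq_refl))) as (w & (v & Hv & ->) & E).
        exists v; split; eauto.
      * intros v Hv. destruct (K2 _ (ex_intro _ v (conj Hv eq_refl))) as (w & (u & Hu & ->) & E).
        exists u; split; eauto.
Qed.

Fixpoint good (M : Type) (Q : M -> Prop) (n : nat) : Lvl M n -> Prop :=
  match n return Lvl M n -> Prop with
  | O => fun P => forall a, P a -> Q a
  | S k => fun x => match x with
                    | inl P => forall a, P a -> Q a
                    | inr X => forall u, X u -> good M Q k u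
                    end
  end.

Lemma good_eqc M Q n (x : Lvl M n) m (y : Lvl M m) :
  eqc M n x m y -> good M Q m y -> good M Q n x.
Proof.
  revert x m y; induction n as [|k IH]; intros x m y.
  - destruct m as [|m]; simpl; [firstorder|]. destruct y; simpl; firstorder.
  - destruct x as [P|X]; [destruct m as [|m]; simpl; try destruct y; simpl; firstorder|].
    destruct m as [|m]; simpl; [firstorder|]. destruct y as [P'|Y]; simpl; [firstorder|].
    intros [K1 K2] HY u Hu. destruct (K1 u Hu) as (v & Hv & E). eauto.
Qed.

Lemma good_lmap M N (f : M -> N) R n (x : Lvl M n) :
  good N R n (lmap M N f n x) -> good M (fun a => R (f a)) n x.
Proof.
  induction n as [|k IH]; simpl; [firstorder|].
  destruct x as [P|X]; simpl; [firstorder|].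
  intros H u Hu; apply IH, H; eauto.
Qed.

Lemma good_img M N (g : M -> N) n (x : Lvl M n) :
  good N (fun d => exists c, g c = d) n (lmap M N g n x).
Proof.
  induction n as [|k IH]; simpl; [firstorder|].
  destruct x as [P|X]; simpl; [firstorder|].
  intros v (u & Hu & ->); auto.
Qed.

Lemma lift M N (p : M -> N) (Q : N -> Prop) (HQ : forall b, Q b -> exists a, p a = b) n (y : Lvl N n) :
  good N Q n y -> exists x, lmap M N p n x = y.
Proof.
  induction n as [|k IH]; simpl.
  - intros H. exists (fun a => y (p a)). apply functional_extensionality; intro b;
      apply propositional_extensionality; split.
    + intros (a & Ha & <-); auto.
    + intros Hb. destruct (HQ b (H b Hb)) as (a & <-). eauto.
  - destruct y as [P|Y]; simpl; intros H.
    + exists (inl (fun a => P (p a))). f_equal. apply functional_extensionality; intro b;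
      apply propositional_extensionality; split.
      * intros (a & Ha & <-); auto.
      * intros Hb. destruct (HQ b (H b Hb)) as (a & <-). eauto.
    + exists (inr (fun u => Y (lmap M N p k u))). f_equal. apply functional_extensionality; intro v;
      apply propositional_extensionality; split.
      * intros (u & Hu & ->); auto.
      * intros Hv. destruct (IH v (H v Hv)) as (u & <-). eauto.
Qed.

Lemma ceq_refl M (x : Code M) : ceq x x.
Proof. apply eqc_refl. Qed.

Lemma ceq_cls M (x y : Code M) : ceq x y -> cls x = cls y.
Proof.
  intro H. unfold cls.
  assert (E : ceq x = ceq y).
  { apply functional_extensionality; intro z; apply propositional_extensionality; split; intro Hz.
    - eapply eqc_trans; [apply eqc_sym; exact H| exact Hz].
    - eapply eqc_trans; [exact H| exact Hz]. }
  revert E. generalize (ex_intro (fun x0 => ceq x = ceq x0) x eq_refl).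
  generalize (ex_intro (fun x0 => ceq y = ceq x0) y eq_refl).
  intros e1 e2 E. revert e2. rewrite E. intros e2. f_equal. apply proof_irrelevance.
Qed.

Lemma cls_inj M (x y : Code M) : cls x = cls y -> ceq x y.
Proof.
  intro H. apply (f_equal (@proj1_sig _ _)) in H. simpl in H.
  rewrite H. apply ceq_refl.
Qed.

Lemma cls_rep M (K : PPb M) : cls (rep K) = K.
Proof.
  destruct K as [K HK]. unfold rep. simpl.
  destruct (constructive_indefinite_description _ HK) as [x Hx]. simpl.
  unfold cls. subst K. f_equal. apply proof_irrelevance.
Qed.

Lemma PPb_cls M (K : PPb M) : exists x, K = cls x.
Proof. exists (rep K). symmetry; apply cls_rep. Qed.

Arguments PPb_cls {M}.
Arguments cls_inj {M x y}.
Arguments ceq_cls {M x y}.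

Lemma PPb_map_cls M N (f : M -> N) (x : Code M) : PPb_map f (cls x) = cls (cmap f x).
Proof.
  unfold PPb_map. apply ceq_cls.
  apply lmap_eqc. apply cls_inj. apply cls_rep.
Qed.

Lemma PPb_map_comp M N O (f : M -> N) (g : N -> O) (K : PPb M) :
  PPb_map g (PPb_map f K) = PPb_map (fun a => g (f a)) K.
Proof.
  destruct (PPb_cls K) as [x ->]. rewrite !PPb_map_cls. unfold cmap; simpl.
  rewrite (lmap_comp M N O f g). reflexivity.
Qed.

Lemma PPb_map_inj M N (f : M -> N) (Hf : forall a b, f a = f b -> a = b) (K K' : PPb M) :
  PPb_map f K = PPb_map f K' -> K = K'.
Proof.
  destruct (PPb_cls K) as [x ->]. destruct (PPb_cls K') as [y ->]. rewrite !PPb_map_cls.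
  intro H. apply cls_inj in H. apply ceq_cls. eapply lmap_eqc_inv; eauto.
Qed.

Arguments PPb_map_inj {M N} f Hf {K K'}.
Arguments PPb_map_cls {M N}.
Arguments PPb_map_comp {M N O}.

Theorem mainTheorem6 (A B C D : Type)
  (piB : A -> B) (piC : A -> C) (f1 : B -> D) (g1 : C -> D) :
  is_pullback piB piC f1 g1 ->
  (forall c c' : C, g1 c = g1 c' -> c = c') ->
  is_pullback (PPb_map piB) (PPb_map piC) (PPb_map f1) (PPb_map g1).
Proof.
  intros [Hcomm Huniv] Hg.
  assert (HfE : (fun a => f1 (piB a)) = (fun a => g1 (piC a))).
  { apply functional_extensionality; exact Hcomm. }
  assert (HpiB : forall a a', piB a = piB a' -> a = a').
  { intros a a' E.
    assert (E2 : piC a = piC a') by (apply Hg; rewrite <- !Hcomm, E; reflexivity).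
    destruct (Huniv unit (fun _ => piB a) (fun _ => piC a) (fun _ => Hcomm a)) as (u & _ & _ & Hu).
    rewrite (Hu (fun _ => a) (fun _ => eq_refl) (fun _ => eq_refl) tt).
    rewrite (Hu (fun _ => a') (fun _ => eq_sym E) (fun _ => eq_sym E2) tt). reflexivity. }
  assert (HQ : forall b, (exists c, g1 c = f1 b) -> exists a, piB a = b).
  { intros b (c & Ec).
    destruct (Huniv unit (fun _ => b) (fun _ => c) (fun _ => eq_sym Ec)) as (u & Hu1 & _).
    exists (u tt); apply Hu1. }
  assert (Hcm : forall K, PPb_map f1 (PPb_map piB K) = PPb_map g1 (PPb_map piC K)).
  { intro K. rewrite !PPb_map_comp, HfE. reflexivity. }
  assert (Hex : forall b c, PPb_map f1 b = PPb_map g1 c ->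
            exists a, PPb_map piB a = b /\ PPb_map piC a = c).
  { intros b c E.
    destruct (PPb_cls b) as [[n y] ->]. destruct (PPb_cls c) as [[m w] ->].
    rewrite !PPb_map_cls in E. apply cls_inj in E. unfold ceq, cmap in E; simpl in E.
    assert (G : good B (fun b => exists c, g1 c = f1 b) n y).
    { apply (good_lmap B D f1 (fun d => exists c, g1 c = d)).
      eapply good_eqc; [exact E| apply good_img]. }
    destruct (lift A B piB _ HQ n y G) as [x Hx].
    exists (cls (existT _ n x)).
    assert (E1 : PPb_map piB (cls (existT _ n x)) = cls (existT _ n y)).
    { rewrite PPb_map_cls. unfold cmap; simpl. rewrite Hx. reflexivity. }
    split; [exact E1|].
    apply (PPb_map_inj g1 Hg). rewrite <- Hcm, E1, !PPb_map_cls.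
    apply ceq_cls. exact E. }
  split; [exact Hcm|].
  intros X h k Hhk.
  exists (fun x => proj1_sig (constructive_indefinite_description _ (Hex (h x) (k x) (Hhk x)))).
  split; [|split].
  - intro x. destruct (constructive_indefinite_description _ _) as [a [Ha1 Ha2]]; exact Ha1.
  - intro x. destruct (constructive_indefinite_description _ _) as [a [Ha1 Ha2]]; exact Ha2.
  - intros u' Hu1 Hu2 x. destruct (constructive_indefinite_description _ _) as [a [Ha1 Ha2]]; simpl.
    apply (PPb_map_inj piB HpiB). rewrite Hu1, Ha1. reflexivity.
Qed.
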